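(* Let $X$ be a complex vector space equipped with an inner product $\langle\cdot,\cdot\rangle'$. Suppose that for each $\alpha\in(0,1]$ we are given a map $\langle\cdot,\cdot\rangle_\alpha : X\times X\to\mathbb{C}$ and real constants $A_\alpha,B_\alpha$ with $0<A_\alpha\le B_\alpha<\infty$ such that for all $x,y\in X$ and all $\alpha\in(0,1]$, \[ A_\alpha\,|\langle x,y\rangle'| \le |\langle x,y\rangle_\alpha| \le B_\alpha\,|\langle x,y\rangle'|. \] Then for all $x,y,z\in X$, all $k\in\mathbb{C}$ and all $\alpha\in(0,1]$: 1. $\langle x,x\rangle_\alpha=0$ if and only if $x=0$; 2. $\langle 0,y\rangle_\alpha=0$; 3. $\frac{|k|A_\alpha}{B_\alpha}|\langle x,y\rangle_\alpha|\le |\langle kx,y\rangle_\alpha|\le \frac{|k|B_\alpha}{A_\alpha}|\langle x,y\rangle_\alpha|$; 4. $\frac{|k|A_\alpha}{B_\alpha}|\langle x,y\rangle_\alpha|\le |\langle x,ky\rangle_\alpha|\le \frac{|k|B_\alpha}{A_\alpha}|\langle x,y\rangle_\alpha|$; 5. $\frac{|k|A_\alpha}{B_\alpha}|\langle y,x\rangle_\alpha|\le |\langle kx,y\rangle_\alpha|\le \frac{|k|B_\alpha}{A_\alpha}|\langle y,x\rangle_\alpha|$; 6. $\frac{|k|A_\alpha}{B_\alpha}|\langle y,x\rangle_\alpha|\le |\langle x,|k|y\rangle_\alpha|\le \frac{|k|B_\alpha}{A_\alpha}|\langle y,x\rangle_\alpha|$; 7. $\frac{A_\alpha}{B_\alpha}|\langle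 x,ky\rangle_\alpha|\le |\langle kx,y\rangle_\alpha|\le \frac{B_\alpha}{A_\alpha}|\langle x,ky\rangle_\alpha|$; 8. $\frac{A_\alpha}{B_\alpha}|\langle kx,y\rangle_\alpha|\le |\langle x,ky\rangle_\alpha|\le \frac{B_\alpha}{A_\alpha}|\langle kx,y\rangle_\alpha|$; 9. $\frac{A_\alpha}{B_\alpha}|\langle ky,x\rangle_\alpha|\le |\langle kx,y\rangle_\alpha|\le \frac{B_\alpha}{A_\alpha}|\langle ky,x\rangle_\alpha|$; 10. $\frac{A_\alpha}{B_\alpha}|\langle ky,x\rangle_\alpha|\le |\langle x,ky\rangle_\alpha|\le \frac{B_\alpha}{A_\alpha}|\langle ky,x\rangle_\alpha|$; 11. $|\langle kx+z,y\rangle_\alpha|\le \frac{B_\alpha}{A_\alpha}\big(|k|\,|\langle x,y\rangle_\alpha|+|\langle z,y\rangle_\alpha|\big)$; 12. $|\langle x,ky+z\rangle_\alpha|\le \frac{B_\alpha}{A_\alpha}\big(|k|\,|\langle x,y\rangle_\alpha|+|\langle x,z\rangle_\alpha|\big)$.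
   Context: The map $\langle\cdot,\cdot\rangle_\alpha$ satisfying the two-sided bound is the paper's (simplified) ''fuzzy inner product'' relative to the classical inner product $\langle\cdot,\cdot\rangle'$. *)

(* Defs.v *)
From HB Require Import structures.
From mathcomp Require Import all_boot all_order all_algebra.
From mathcomp Require Import reals.
From mathcomp Require Import complex.
Set Implicit Arguments. Unset Strict Implicit. Unset Printing Implicit Defensive.
Import Order.TTheory GRing.Theory Num.Theory.
Local Open Scope ring_scope.

Definition is_inner_product (R : realType) (X : lmodType R[i])
    (ip : X -> X -> R[i]) : Prop :=
  [/\ (forall (a : R[i]) (x y z : X), ip (a *: x + y) z = a * ip x z + ip y z),
      (forall x y : X, ip y x = conjc (ip x y)),
      (forall x : X, 0 <= ip x x) &
      (forall x : X, ip x x = 0 -> x = 0)].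

(* Main.v *)
Require Import Defs.
From HB Require Import structures.
From mathcomp Require Import all_boot all_order all_algebra.
From mathcomp Require Import reals.
From mathcomp Require Import complex.
From mathcomp Require Import ring.
Import Order.TTheory GRing.Theory Num.Theory.
Local Open Scope ring_scope.


Lemma L1 {F : numFieldType} {Aa Ba n m p q c : F} :
  0 < Aa -> 0 < Ba -> 0 <= n -> Aa * n <= m -> m <= Ba * n ->
  Aa * p <= q -> q <= Ba * p -> p = c * n -> 0 <= c ->
  c * Aa / Ba * m <= q /\ q <= c * Ba / Aa * m.
Proof.
move=> A0 B0 n0 h1 h2 h3 h4 pE c0; rewrite pE in h3 h4; split.
  apply: le_trans h3.
  have -> : Aa * (c * n) = c * Aa / Ba * (Ba * n).
    by field; rewrite ?lt0r_neq0.
  apply: ler_wpM2l => //.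
  by apply: divr_ge0; [apply: mulr_ge0 => //; apply: ltW | apply: ltW].
apply: (le_trans h4).
have -> : Ba * (c * n) = c * Ba / Aa * (Aa * n).
  by field; rewrite ?lt0r_neq0.
apply: ler_wpM2l => //.
by apply: divr_ge0; [apply: mulr_ge0 => //; apply: ltW | apply: ltW].
Qed.

Lemma L2 {F : numFieldType} {Aa Ba n1 m1 n2 m2 q s c : F} :
  0 < Aa -> 0 < Ba -> 0 <= c ->
  Aa * n1 <= m1 -> Aa * n2 <= m2 ->
  q <= Ba * s -> s <= c * n1 + n2 ->
  q <= Ba / Aa * (c * m1 + m2).
Proof.
move=> A0 B0 c0 h1 h2 h3 h4.
apply: (le_trans h3).
have -> : Ba / Aa * (c * m1 + m2) = Ba * (c * (m1 / Aa) + m2 / Aa).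
  by field; rewrite ?lt0r_neq0.
apply: ler_wpM2l; first exact: ltW.
apply: (le_trans h4); apply: lerD.
  apply: ler_wpM2l => //; rewrite ler_pdivlMr // mulrC //.
by rewrite ler_pdivlMr // mulrC.
Qed.

Theorem mainTheorem4 (R : realType) (X : lmodType R[i])
    (ip' : X -> X -> R[i]) (ipa : R -> X -> X -> R[i]) (A B : R -> R) :
  is_inner_product ip' ->
  (forall a : R, 0 < a <= 1 -> 0 < A a <= B a) ->
  (forall (a : R) (x y : X), 0 < a <= 1 ->
     ((A a)%:C)%C * `|ip' x y| <= `|ipa a x y| /\
     `|ipa a x y| <= ((B a)%:C)%C * `|ip' x y|) ->
  forall (a : R), 0 < a <= 1 ->
  let Aa := ((A a)%:C)%C in let Ba := ((B a)%:C)%C in let ip := ipa a in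
  forall (x y z : X) (k : R[i]),
  ((ip x x = 0 <-> x = 0))
  /\ (ip 0 y = 0)
  /\ ((`|k| * Aa / Ba * `|ip x y| <= `|ip (k *: x) y| /\
         `|ip (k *: x) y| <= `|k| * Ba / Aa * `|ip x y|))
  /\ ((`|k| * Aa / Ba * `|ip x y| <= `|ip x (k *: y)| /\
         `|ip x (k *: y)| <= `|k| * Ba / Aa * `|ip x y|))
  /\ ((`|k| * Aa / Ba * `|ip y x| <= `|ip (k *: x) y| /\
         `|ip (k *: x) y| <= `|k| * Ba / Aa * `|ip y x|))
  /\ ((`|k| * Aa / Ba * `|ip y x| <= `|ip x (`|k| *: y)| /\
         `|ip x (`|k| *: y)| <= `|k| * Ba / Aa * `|ip y x|))
  /\ ((Aa / Ba * `|ip x (k *: y)| <= `|ip (k *: x) y| /\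
         `|ip (k *: x) y| <= Ba / Aa * `|ip x (k *: y)|))
  /\ ((Aa / Ba * `|ip (k *: x) y| <= `|ip x (k *: y)| /\
         `|ip x (k *: y)| <= Ba / Aa * `|ip (k *: x) y|))
  /\ ((Aa / Ba * `|ip (k *: y) x| <= `|ip (k *: x) y| /\
         `|ip (k *: x) y| <= Ba / Aa * `|ip (k *: y) x|))
  /\ ((Aa / Ba * `|ip (k *: y) x| <= `|ip x (k *: y)| /\
         `|ip x (k *: y)| <= Ba / Aa * `|ip (k *: y) x|))
  /\ (`|ip (k *: x + z) y| <= Ba / Aa * (`|k| * `|ip x y| + `|ip z y|))
  /\ (`|ip x (k *: y + z)| <= Ba / Aa * (`|k| * `|ip x y| + `|ip x z|)).
Proof.
move=> [lin sym pos def] hAB hb a ha Aa Ba ip x y z k.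
have [A0 AB] := andP (hAB a ha).
have Aa0 : 0 < Aa by rewrite ltcR.
have Ba0 : 0 < Ba by rewrite ltcR (lt_le_trans A0 AB).
have b := hb a.
have ip0 : forall w, ip' 0 w = 0.
  move=> w; have h := lin 1 0 0 w; rewrite scale1r addr0 mul1r in h.
  by apply: (addrI (ip' 0 w)); rewrite addr0 -h.
have ip0r : forall w, ip' w 0 = 0 by move=> w; rewrite sym ip0 conjc0.
have linl : forall (c : R[i]) u w, ip' (c *: u) w = c * ip' u w.
  by move=> c u w; rewrite -[c *: u]addr0 lin ip0 addr0.
have linr : forall (c : R[i]) u w v, ip' u (c *: w + v) = conjc c * ip' u w + ip' u v.
  by move=> c u w v; rewrite sym lin rmorphD rmorphM /= -!sym.
have nsym : forall u w, `|ip' u w| = `|ip' w u|.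
  by move=> u w; rewrite sym normcJ.
have nl : forall (c : R[i]) u w, `|ip' (c *: u) w| = `|c| * `|ip' u w|.
  by move=> c u w; rewrite linl normrM.
have nr : forall (c : R[i]) u w, `|ip' u (c *: w)| = `|c| * `|ip' u w|.
  by move=> c u w; rewrite -[c *: w]addr0 linr ip0r addr0 normrM normcJ.
have bl : forall u w, Aa * `|ip' u w| <= `|ip u w| by move=> u w; case: (b u w ha).
have bu : forall u w, `|ip u w| <= Ba * `|ip' u w| by move=> u w; case: (b u w ha).
have K := L1 Aa0 Ba0.
have n0 : forall u w, 0 <= `|ip' u w| by [].
have k0 : 0 <= `|k| by [].
split.
  split; last first.
    move=> ->; apply/normr0_eq0/eqP; rewrite eq_le normr_ge0 andbT.
    by apply: (le_trans (bu 0 0)); rewrite ip0 normr0 mulr0.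
  move=> h; apply: def; apply/normr0_eq0/eqP; rewrite eq_le normr_ge0 andbT.
  by rewrite -(pmulr_rle0 _ Aa0); have := bl x x; rewrite h normr0.
split.
  apply/normr0_eq0/eqP; rewrite eq_le normr_ge0 andbT.
  by apply: (le_trans (bu 0 y)); rewrite ip0 normr0 mulr0.
split; first by apply: K (bl _ _) (bu _ _) (bl _ _) (bu _ _) (nl _ _ _) k0.
split; first by apply: K (bl _ _) (bu _ _) (bl _ _) (bu _ _) (nr _ _ _) k0.
split; first by apply: K (bl _ _) (bu _ _) (bl _ _) (bu _ _) _ k0 => //; rewrite nl nsym.
split.
  apply: K (bl _ _) (bu _ _) (bl _ _) (bu _ _) _ k0 => //.
  by rewrite nr normr_id nsym.
have c1 : (0 : R[i]) <= 1 by [].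
split.
  have e : `|ip' (k *: x) y| = 1 * `|ip' x (k *: y)| by rewrite mul1r nl nr.
  by have := L1 Aa0 Ba0 (n0 _ _) (bl x (k *: y)) (bu x (k *: y)) (bl (k *: x) y) (bu (k *: x) y) e c1; rewrite !mul1r.
split.
  have e : `|ip' x (k *: y)| = 1 * `|ip' (k *: x) y| by rewrite mul1r nl nr.
  by have := L1 Aa0 Ba0 (n0 _ _) (bl (k *: x) y) (bu (k *: x) y) (bl x (k *: y)) (bu x (k *: y)) e c1; rewrite !mul1r.
split.
  have e : `|ip' (k *: x) y| = 1 * `|ip' (k *: y) x| by rewrite mul1r !nl nsym.
  by have := L1 Aa0 Ba0 (n0 _ _) (bl (k *: y) x) (bu (k *: y) x) (bl (k *: x) y) (bu (k *: x) y) e c1; rewrite !mul1r.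
split.
  have e : `|ip' x (k *: y)| = 1 * `|ip' (k *: y) x| by rewrite mul1r nl nr nsym.
  by have := L1 Aa0 Ba0 (n0 _ _) (bl (k *: y) x) (bu (k *: y) x) (bl x (k *: y)) (bu x (k *: y)) e c1; rewrite !mul1r.
split.
  apply: (L2 Aa0 Ba0 k0 (bl x y) (bl z y) (bu _ _)).
  by rewrite lin -normrM ler_normD.
apply: (L2 Aa0 Ba0 k0 (bl x y) (bl x z) (bu _ _)).
by rewrite linr -(normcJ k) -normrM ler_normD.
Qed.
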